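(* Let $X$ be a topological space possessing an infinite metrizable gauge, let $\kappa$ be a regular cardinal with $\kappa\in\mathrm{MG}(X)$, let $A$ be a closed subset of $X$, let $G\in\mathcal{G}_\kappa$, let $S$ be a Dedekind complete g-characteristic subset of $G$, and let $h\in\mathrm{Ult}(X;S)$. Define $\Theta\colon X\times X\to S$ by $\Theta(x,y)=\min\{h(x,y),\max\{\varrho_{h,A}(x),\varrho_{h,A}(y)\}\}$. Then: (1) $\Theta$ is an $S$-pseudo-ultrametric on $X$, i.e. $\Theta(x,x)=0$, $\Theta\ge0$, $\Theta(x,y)=\Theta(y,x)$ and $\Theta(x,y)\le\max\{\Theta(x,z),\Theta(z,y)\}$ for all $x,y,z\in X$; (2) $\Theta(x,y)=0$ for all $x,y\in A$; (3) the restriction of $\Theta$ to $(X\setminus A)\times(X\setminus A)$ is an $S$-ultrametric on $X\setminus A$ generating the subspace topology of $X\setminus A$.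
   Context: A linearly ordered Abelian group is an Abelian group with a linear order compatible with addition. For $x,y\in G_{>0}$, $x\asymp y$ iff $y\le nx$ and $x\le my$ for some $n,m\in\mathbb{Z}_{\ge1}$; $\mathrm{Arc}(G)=G_{>0}/\asymp$, ordered by $[x]\preceq[y]$ iff ($nx<y$ for all $n$) or $x\asymp y$; $\mathrm{Arc}(G)^\perp$ is $\mathrm{Arc}(G)$ with a new least element adjoined. For a bottomed linearly ordered set $T$ (least element $\perp_T$, $T^*=T\setminus\{\perp_T\}$), $\chi(T)$ is the least cardinal $\kappa>0$ such that some strictly decreasing family $(s_\alpha)_{\alpha<\kappa}$ in $T^*$ has every $t\in T^*$ bounded below by some $s_\alpha$. A $G$-metric: $d\colon X^2\to G$, $d(x,y)=0\iff x=y$, $d\ge0$, symmetric, triangle inequality; $\mathrm{Met}(X;G)$ those generating the topology of $X$ via open balls. $\mathrm{MG}(X)$: cardinals $\kappa$ with some $G$, $\chi(\mathrm{Arc}(G)^\perp)=\kappa$, $\mathrm{Met}(X;G)\ne\emptyset$; infinite metrizable gauge: some $\kappa\in\mathrm{MG}(X)$ with $\kappa\ge\omega_0$. $\mathcal{G}_\kappa$: groups with $\chi(\mathrm{Arc}(G)^\perp)=\kappa$. A subset $S\subseteq G$ is g-characteristic if $S\subseteq G_{\ge 0}$, $0\in S$, and every $s\in G_{>0}$ has some $t\in S\setminus\{0\}$ with $t\le s$; $S$ is Dedekind complete if every non-empty subset of $S$ bounded above in $S$ has a supremum in $S$ (equivalently, every non-empty subset bounded below has an infimum in $S$). An $S$-ultrametric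 is $d\colon X^2\to S$ with $d(x,y)=0\iff x=y$, symmetric, $d(x,y)\le\max\{d(x,z),d(z,y)\}$; $\mathrm{Ult}(X;S)$ is the set of those generating the topology of $X$ via open balls of radii in $S\setminus\{0\}$. $\varrho_{h,A}(x)=\inf\{h(x,a):a\in A\}$, the infimum taken in $S$. *)

(* Defs.v *)
From mathcomp Require Import all_boot all_order all_algebra.
From mathcomp Require Import all_classical.
From mathcomp Require Import topology.

Set Implicit Arguments.
Unset Strict Implicit.
Unset Printing Implicit Defensive.

Import GRing.Theory.
Local Open Scope classical_set_scope.
Local Open Scope ring_scope.

Record loag := LOAG {
  lg_sort :> zmodType;
  lg_le : rel lg_sort;
  lg_refl : forall x, lg_le x x;
  lg_trans : forall x y z, lg_le x y -> lg_le y z -> lg_le x z;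
  lg_anti : forall x y, lg_le x y -> lg_le y x -> x = y;
  lg_total : forall x y, lg_le x y || lg_le y x;
  lg_addr : forall x y z, lg_le x y -> lg_le (x + z) (y + z)
}.

Definition glt (G : loag) (x y : G) : Prop := lg_le x y /\ x <> y.
Definition gmax (G : loag) (x y : G) : G := if lg_le x y then y else x.
Definition gmin (G : loag) (x y : G) : G := if lg_le x y then x else y.

Definition asymp (G : loag) (x y : G) : Prop :=
  exists n m : nat, (0 < n)%N /\ (0 < m)%N /\ lg_le y (x *+ n) /\ lg_le x (y *+ m).

Definition Arc (G : loag) : Type :=
  {C : set G | exists x : G, glt 0 x /\ C = [set y | glt 0 y /\ asymp x y]}.

Definition arc_le (G : loag) (C D : Arc G) : Prop :=
  exists x y : G, sval C x /\ sval D y /\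
    ((forall n : nat, (0 < n)%N -> glt (x *+ n) y) \/ asymp x y).

(* Arc(G)^⊥ : Arc(G) with a new least element (None) *)
Definition ArcB (G : loag) : Type := option (Arc G).
Definition arcB_le (G : loag) (C D : ArcB G) : Prop :=
  match C, D with
  | None, _ => True
  | Some _, None => False
  | Some c, Some d => arc_le c d
  end.

(* Cardinals, represented as initial ordinals                          *)
Definition card_le (A B : Type) : Prop := exists f : A -> B, injective f.

Record cardinal := Cardinal {
  cd_sort :> Type;
  cd_lt : cd_sort -> cd_sort -> Prop;
  cd_irrefl : forall a, ~ cd_lt a a;
  cd_trans : forall a b c, cd_lt a b -> cd_lt b c -> cd_lt a c;
  cd_total : forall a b, cd_lt a b \/ a = b \/ cd_lt b a;
  cd_wf : well_founded cd_lt;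
  cd_initial : forall k : cd_sort, ~ card_le cd_sort {j : cd_sort | cd_lt j k}
}.

Definition card_infinite (K : cardinal) : Prop := card_le nat K.

Definition regular (K : cardinal) : Prop :=
  card_infinite K /\
  forall C : set K, (forall k : K, exists c, C c /\ (cd_lt k c \/ k = c)) ->
    card_le K {c : K | C c}.

Definition dec_coinitial (T : Type) (le : T -> T -> Prop) (bot : T)
    (K : cardinal) (s : K -> T) : Prop :=
  (forall a : K, s a <> bot) /\
  (forall a b : K, cd_lt a b -> le (s b) (s a) /\ s b <> s a) /\
  (forall t : T, t <> bot -> exists a : K, le (s a) t).

Definition chi_is (T : Type) (le : T -> T -> Prop) (bot : T) (K : cardinal) : Prop :=
  inhabited K /\ (exists s : K -> T, dec_coinitial le bot s) /\
  forall K' : cardinal, inhabited K' -> (exists s : K' -> T, dec_coinitial le bot s) ->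
    card_le K K'.

Definition in_Gkappa (G : loag) (K : cardinal) : Prop :=
  chi_is (@arcB_le G) None K.

Definition is_Gmetric (X : Type) (G : loag) (d : X -> X -> G) : Prop :=
  (forall x y, d x y = 0 <-> x = y) /\
  (forall x y, lg_le 0 (d x y)) /\
  (forall x y, d x y = d y x) /\
  (forall x y z, lg_le (d x y) (d x z + d z y)).

Definition in_Met (X : topologicalType) (G : loag) (d : X -> X -> G) : Prop :=
  is_Gmetric d /\
  forall U : set X, open U <->
    (forall x, U x -> exists r : G, glt 0 r /\ [set y | glt (d x y) r] `<=` U).

Definition in_MG (X : topologicalType) (K : cardinal) : Prop :=
  exists G : loag, in_Gkappa G K /\ exists d : X -> X -> G, in_Met d.

Definition has_infinite_metrizable_gauge (X : topologicalType) : Prop :=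
  exists K : cardinal, in_MG X K /\ card_infinite K.

Definition g_characteristic (G : loag) (S : set G) : Prop :=
  (forall s, S s -> lg_le 0 s) /\ S 0 /\
  (forall s, glt 0 s -> exists t, S t /\ t <> 0 /\ lg_le t s).

Definition dedekind_complete (G : loag) (S : set G) : Prop :=
  forall B : set G, B `<=` S -> B !=set0 ->
    (exists u, S u /\ forall b, B b -> lg_le b u) ->
    exists u, S u /\ (forall b, B b -> lg_le b u) /\
      (forall v, S v -> (forall b, B b -> lg_le b v) -> lg_le u v).

Definition is_inf_in (G : loag) (S : set G) (B : set G) (m : G) : Prop :=
  S m /\ (forall b, B b -> lg_le m b) /\
  (forall v, S v -> (forall b, B b -> lg_le v b) -> lg_le v m).

Definition is_S_ultrametric_on (X : Type) (G : loag) (S : set G) (D : set X)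
    (d : X -> X -> G) : Prop :=
  (forall x y, D x -> D y -> S (d x y)) /\
  (forall x y, D x -> D y -> (d x y = 0 <-> x = y)) /\
  (forall x y, D x -> D y -> d x y = d y x) /\
  (forall x y z, D x -> D y -> D z -> lg_le (d x y) (gmax (d x z) (d z y))).

Definition generates_subspace_topology (X : topologicalType) (G : loag)
    (S : set G) (D : set X) (d : X -> X -> G) : Prop :=
  forall V : set X, V `<=` D ->
    ((exists U : set X, open U /\ V = U `&` D) <->
     (forall x, V x -> exists r : G, S r /\ r <> 0 /\
        (forall y, D y -> glt (d x y) r -> V y))).

Definition in_Ult (X : topologicalType) (G : loag) (S : set G)
    (d : X -> X -> G) : Prop :=
  is_S_ultrametric_on S setT d /\
  forall U : set X, open U <->
    (forall x, U x -> exists r : G, S r /\ r <> 0 /\ [set y | glt (d x y) r] `<=` U).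

Definition is_S_pseudo_ultrametric (X : Type) (G : loag) (S : set G)
    (d : X -> X -> G) : Prop :=
  (forall x y, S (d x y)) /\
  (forall x, d x x = 0) /\
  (forall x y, lg_le 0 (d x y)) /\
  (forall x y, d x y = d y x) /\
  (forall x y z, lg_le (d x y) (gmax (d x z) (d z y))).

Definition Theta (X : Type) (G : loag) (h : X -> X -> G) (rho : X -> G)
    (x y : X) : G :=
  gmin (h x y) (gmax (rho x) (rho y)).

(* Main.v *)
Require Import Defs.
From mathcomp Require Import all_boot all_order all_algebra.
From mathcomp Require Import all_classical.
From mathcomp Require Import topology.
From Stdlib Require Import Classical.
Local Open Scope classical_set_scope.

Set Implicit Arguments.
Unset Strict Implicit.
Section L.
Variable G : loag.
Implicit Types x y z : G.

Lemma le_tot x y : lg_le x y \/ lg_le y x.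
Proof. by have := lg_total x y; case/orP; auto. Qed.

Lemma gltP x y : glt x y <-> ~~ lg_le y x.
Proof.
split.
- move=> [le neq]; apply/negP => yx; apply: neq; exact: lg_anti.
- move=> H; split.
  + by case: (le_tot x y) => // yx; rewrite yx in H.
  + by move=> e; subst; rewrite lg_refl in H.
Qed.

Lemma lt_le_trans x y z : glt x y -> lg_le y z -> glt x z.
Proof.
move/gltP => H yz; apply/gltP; apply/negP => zx.
by rewrite (lg_trans yz zx) in H.
Qed.

Lemma le_lt_trans x y z : lg_le x y -> glt y z -> glt x z.
Proof.
move=> xy /gltP H; apply/gltP; apply/negP => zx.
by rewrite (lg_trans zx xy) in H.
Qed.

Lemma lt_le_F x y : glt x y -> lg_le y x -> False.
Proof. by move/gltP => H yx; rewrite yx in H. Qed.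

Lemma gmin_le_l x y : lg_le (gmin x y) x.
Proof. rewrite /gmin; case: ifP => [_|H]; first exact: lg_refl.
by case: (le_tot x y) => // xy; rewrite xy in H. Qed.

Lemma gmin_le_r x y : lg_le (gmin x y) y.
Proof. rewrite /gmin; case: ifP => [->//|_]; exact: lg_refl. Qed.

Lemma gmax_ge_r x y : lg_le y (gmax x y).
Proof. rewrite /gmax; case: ifP => [_|H]; first exact: lg_refl.
by case: (le_tot x y) => // xy; rewrite xy in H. Qed.

Lemma gmax_ge_l x y : lg_le x (gmax x y).
Proof. rewrite /gmax; case: ifP => [->//|_]; exact: lg_refl. Qed.

Lemma gmin_glb x y z : lg_le z x -> lg_le z y -> lg_le z (gmin x y).
Proof. by rewrite /gmin; case: ifP. Qed.

Lemma gmax_lub x y z : lg_le x z -> lg_le y z -> lg_le (gmax x y) z.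
Proof. by rewrite /gmax; case: ifP. Qed.

Lemma gmin_cases x y : gmin x y = x \/ gmin x y = y.
Proof. by rewrite /gmin; case: ifP; auto. Qed.

Lemma gmax_cases x y : gmax x y = x \/ gmax x y = y.
Proof. by rewrite /gmax; case: ifP; auto. Qed.

Lemma gmaxC x y : gmax x y = gmax y x.
Proof.
by apply: lg_anti; apply: gmax_lub; rewrite ?gmax_ge_l ?gmax_ge_r.
Qed.

End L.

Theorem proposition4p2 (X : topologicalType) (K : cardinal) (A : set X)
    (G : loag) (S : set G) (h : X -> X -> G) (rho : X -> G) :
  has_infinite_metrizable_gauge X ->
  regular K -> in_MG X K ->
  closed A ->
  in_Gkappa G K ->
  g_characteristic S -> dedekind_complete S ->
  in_Ult S h ->
  (* rho = ϱ_{h,A}: rho x is the infimum in S of {h(x,a) : a ∈ A} *)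
  (forall x : X, is_inf_in S [set h x a | a in A] (rho x)) ->
  is_S_pseudo_ultrametric S (Theta h rho) /\
  (forall x y, A x -> A y -> Theta h rho x y = 0%R) /\
  (is_S_ultrametric_on S (~` A) (Theta h rho) /\
   generates_subspace_topology S (~` A) (Theta h rho)).
Proof.
move=> _ _ _ cA _ gc _ [hU hop] rinf.
case: gc => [Sge0 [S0 _]].
case: hU => [hS [h0 [hsym hult]]].
have hS' x y : S (h x y) by exact: (hS x y I I).
have h0' x y : h x y = 0%R <-> x = y by exact: (h0 x y I I).
have hsym' x y : h x y = h y x by exact: (hsym x y I I).
have hult' x y z : lg_le (h x y) (gmax (h x z) (h z y)) by exact: (hult x y z I I I).
clear hS h0 hsym hult.
have hxx x : h x x = 0%R by apply/h0'.
have rS x : S (rho x) by case: (rinf x).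
have rlow x a : A a -> lg_le (rho x) (h x a).
  by move=> Aa; case: (rinf x) => _ [H _]; apply: H; exists a.
have rgreat x v : S v -> (forall a, A a -> lg_le v (h x a)) -> lg_le v (rho x).
  move=> Sv H; case: (rinf x) => _ [_ H2]; apply: H2 => // b [a Aa <-]; exact: H.
have rult x y : lg_le (rho x) (gmax (h x y) (rho y)).
  case: (boolP (lg_le (rho x) (gmax (h x y) (rho y)))) => // Hn.
  have lt1 : glt (gmax (h x y) (rho y)) (rho x) by apply/gltP.
  have ltxy : glt (h x y) (rho x) by apply: le_lt_trans lt1; apply: gmax_ge_l.
  have ltry : glt (rho y) (rho x) by apply: le_lt_trans lt1; apply: gmax_ge_r.
  destruct (classic (exists a, A a /\ ~~ lg_le (rho x) (h y a))) as [[a [Aa Ha]]|Hc].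
    have ltya : glt (h y a) (rho x) by apply/gltP.
    exfalso; have := hult' x a y; move: (rlow x a Aa) => H1 H2.
    have H3 := lg_trans H1 H2.
    by case: (gmax_cases (h x y) (h y a)) => E; rewrite E in H3;
      [exact: (lt_le_F ltxy H3) | exact: (lt_le_F ltya H3)].
  exfalso; apply: (lt_le_F ltry); apply: rgreat => // a Aa.
  case: (boolP (lg_le (rho x) (h y a))) => // Hb; exfalso; apply: Hc; by exists a.
set T := Theta h rho.
have T_le_h x y : lg_le (T x y) (h x y) by apply: gmin_le_l.
have T_le_m x y : lg_le (T x y) (gmax (rho x) (rho y)) by apply: gmin_le_r.
have T_cases x y : T x y = h x y \/ T x y = gmax (rho x) (rho y) by apply: gmin_cases.
have TS x y : S (T x y).
  case: (T_cases x y) => ->; first exact: hS'.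
  by case: (gmax_cases (rho x) (rho y)) => ->.
have Tge0 x y : lg_le 0%R (T x y) by apply: Sge0.
have Txx x : T x x = 0%R by apply: lg_anti => //; rewrite -(hxx x).
have Tsym x y : T x y = T y x by rewrite /T /Theta hsym' gmaxC.
have Tult x y z : lg_le (T x y) (gmax (T x z) (T z y)).
  set M := gmax (T x z) (T z y).
  have l1 : lg_le (T x z) M by apply: gmax_ge_l.
  have l2 : lg_le (T z y) M by apply: gmax_ge_r.
  case: (T_cases x z) => E1; case: (T_cases z y) => E2; rewrite E1 E2 in l1 l2.
  - apply: lg_trans (T_le_h x y) _; apply: lg_trans (hult' x y z) _.
    exact: gmax_lub.
  - apply: lg_trans (T_le_m x y) _; apply: gmax_lub.
      apply: lg_trans (rult x z) _; apply: gmax_lub => //.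
      exact: lg_trans (gmax_ge_l _ _) l2.
    exact: lg_trans (gmax_ge_r _ _) l2.
  - apply: lg_trans (T_le_m x y) _; apply: gmax_lub.
      exact: lg_trans (gmax_ge_l _ _) l1.
    apply: lg_trans (rult y z) _; apply: gmax_lub; first by rewrite hsym'.
    exact: lg_trans (gmax_ge_r _ _) l1.
  - apply: lg_trans (T_le_m x y) _; apply: gmax_lub.
      exact: lg_trans (gmax_ge_l _ _) l1.
    exact: lg_trans (gmax_ge_r _ _) l2.
have oA : open (~` A) by apply: closed_openC.
have rpos x : (~` A) x -> rho x <> 0%R.
  move=> nAx; have [r [Sr [r0 sub]]] := (hop _).1 oA x nAx.
  have : lg_le r (rho x).
    apply: rgreat => // a Aa.
    case: (boolP (lg_le r (h x a))) => // Hb; exfalso.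
    by apply: (sub a) => //; apply/gltP.
  move=> H E; rewrite E in H; apply: r0; exact: (lg_anti H (Sge0 _ Sr)).
split; first by split; [exact: TS|split; [exact: Txx|split; [exact: Tge0|split; [exact: Tsym|exact: Tult]]]].
split.
  move=> x y Ax Ay.
  have rx0 z : A z -> rho z = 0%R.
    move=> Az; apply: lg_anti; first by rewrite -(hxx z); apply: rlow.
    exact: Sge0.
  apply: lg_anti => //; apply: lg_trans (T_le_m x y) _.
  by rewrite (rx0 x Ax) (rx0 y Ay); apply: gmax_lub; apply: lg_refl.
split.
  split => //; split => // x y nAx nAy; split; last by move=> ->.
  case: (T_cases x y) => -> E; first exact/h0'.
  exfalso; apply: (rpos x nAx); apply: lg_anti; last exact: Sge0.
  by rewrite -E; apply: gmax_ge_l.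
move=> V VA; split.
- move=> [U [oU ->]] x [Ux nAx].
  have [r1 [Sr1 [r10 sub]]] := (hop U).1 oU x Ux.
  exists (gmin r1 (rho x)); split; first by case: (gmin_cases r1 (rho x)) => ->.
  split; first by case: (gmin_cases r1 (rho x)) => ->; [|apply: rpos].
  move=> y nAy lt; split => //; apply: sub => /=.
  case: (T_cases x y) => E; rewrite E in lt.
    by apply: lt_le_trans lt _; apply: gmin_le_l.
  exfalso; apply: (lt_le_F lt); apply: lg_trans (gmin_le_r _ _) _.
  exact: gmax_ge_l.
- move=> H; exists V; split; last by rewrite setIidl.
  apply/(hop V).2 => x Vx.
  have [r [Sr [r0 sub]]] := H x Vx.
  have [r2 [Sr2 [r20 sub2]]] := (hop _).1 oA x (VA x Vx).
  exists (gmin r r2); split; first by case: (gmin_cases r r2) => ->.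
  split; first by case: (gmin_cases r r2) => ->.
  move=> y /= lt; apply: sub.
    by apply: sub2 => /=; apply: lt_le_trans lt _; apply: gmin_le_r.
  apply: le_lt_trans (T_le_h x y) _; apply: lt_le_trans lt _; apply: gmin_le_l.
Qed.
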